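(* Let $(E,\|\cdot\|_E)$ be a fully symmetric sequence space with $E\neq l_\infty$, and let $T$ be a Dunford–Schwartz operator on $l_\infty$. Then for every $x\in E$ there exists $\widehat{x}\in E$ such that $$\Big\|\frac1n\sum_{k=0}^{n-1}T^k(x)-\widehat{x}\Big\|_\infty\to 0 \quad (n\to\infty).$$
   Context: $l_\infty$ is the Banach lattice of bounded real sequences $x=\{(x)_n\}_{n\ge1}$ with $\|x\|_\infty=\sup_n|(x)_n|$; $c_0$ is the subspace of sequences converging to $0$; $l_1$ is the space of absolutely summable sequences with $\|x\|_1=\sum_n|(x)_n|$. A linear operator $T:l_\infty\to l_\infty$ is a Dunford–Schwartz operator if $\|T(x)\|_1\le\|x\|_1$ for all $x\in l_1$ and $\|T(x)\|_\infty\le\|x\|_\infty$ for all $x\in l_\infty$. For $x\in l_\infty$, its non-increasing rearrangement is the sequence $x^*=\{(x^* )_n\}$ with $(x^* )_n=\inf\{\sup_{m\notin F}|(x)_m| : F\subset\mathbb N \text{ finite}, \operatorname{card}(F)<n\}$. A symmetric sequence space is a nonzero linear subspace $E\subset l_\infty$ with a Banach norm $\|\cdot\|_E$ such that $y\in E$, $x\in l_\infty$, $x^*\le y^*$ imply $x\in E$ and $\|x\|_E\le\|y\|_E$ (normalized so that $\|\{1,0,0,\dots\}\|_E=1$). Write $x\prec y$ if $\sum_{n=1}^k(x^* )_n\le\sum_{n=1}^k(y^* )_n$ for all $k\in\mathbb N$. A symmetric sequence space $E$ is fully symmetric if $x\in l_\infty$, $y\in E$, $x\prec y$ imply $x\in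 E$ and $\|x\|_E\le\|y\|_E$. *)

(* Defs.v *)
(* real sequences indexed by nat (index 0 = paper's index 1). *)
From HB Require Import structures.
From mathcomp Require Import all_boot all_order all_algebra.
From mathcomp Require Import all_classical all_reals.
Set Implicit Arguments. Unset Strict Implicit. Unset Printing Implicit Defensive.
Import Order.TTheory GRing.Theory Num.Theory.
Local Open Scope classical_set_scope.
Local Open Scope ring_scope.

Section Defs.
Variable R : realType.

Definition rseq := nat -> R.

Definition bounded (x : rseq) : Prop := exists M : R, forall n, `|x n| <= M.

Definition summable (x : rseq) : Prop :=
  exists M : R, forall N, \sum_(i < N) `|x i| <= M.

(* ||x||_infty (meaningful for bounded x) *)
Definition norm_inf (x : rseq) : R := sup [set `|x n| | n in [set: nat]].

(* ||x||_1 (meaningful for summable x) *)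
Definition norm1 (x : rseq) : R :=
  sup [set \sum_(i < N) `|x i| | N in [set: nat]].

(* non-increasing rearrangement, 0-indexed: (x^* )_n (0-indexed) =
   inf over finite F with card F < n+1 of sup_{m ∉ F} |x m|.
   Finite sets of cardinality <= n are exactly the sets of entries of
   lists of length <= n. *)
Definition xstar (x : rseq) (n : nat) : R :=
  inf [set sup [set `|x m| | m in [set m | m \notin F]]
      | F in [set F : seq nat | (size F <= n)%N]].

Definition majorized (x y : rseq) : Prop :=
  forall k : nat, \sum_(i < k) xstar x i <= \sum_(i < k) xstar y i.

Definition rseq_add (x y : rseq) : rseq := fun n => x n + y n.
Definition rseq_scale (a : R) (x : rseq) : rseq := fun n => a * x n.
Definition rseq_sub (x y : rseq) : rseq := fun n => x n - y n.

Definition symmetric_space (E : set rseq) (normE : rseq -> R) : Prop :=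
      (forall x, E x -> bounded x) /\
      (exists x, E x /\ x <> (fun _ => 0)) /\
      E (fun _ => 0) /\
      (forall x y, E x -> E y -> E (rseq_add x y)) /\
      (forall a x, E x -> E (rseq_scale a x)) /\
      [/\ (forall x, E x -> 0 <= normE x),
          (forall x, E x -> normE x = 0 -> x = (fun _ => 0)),
          (forall a x, E x -> normE (rseq_scale a x) = `|a| * normE x) &
          (forall x y, E x -> E y -> normE (rseq_add x y) <= normE x + normE y)] /\
      (forall u : nat -> rseq, (forall k, E (u k)) ->
        (forall eps : R, 0 < eps -> exists N, forall m n, (N <= m)%N -> (N <= n)%N ->
             normE (rseq_sub (u m) (u n)) < eps) ->
        exists v, E v /\ forall eps : R, 0 < eps -> exists N, forall n, (N <= n)%N ->
             normE (rseq_sub (u n) v) < eps) /\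
      (forall x y, E y -> bounded x -> (forall n, xstar x n <= xstar y n) ->
         E x /\ normE x <= normE y) /\
      normE (fun n => if n == 0%N then 1 else 0) = 1.

Definition fully_symmetric_space (E : set rseq) (normE : rseq -> R) : Prop :=
  symmetric_space E normE /\
  (forall x y, bounded x -> E y -> majorized x y -> E x /\ normE x <= normE y).

Definition linear_on_linf (T : rseq -> rseq) : Prop :=
  (forall x, bounded x -> bounded (T x)) /\
  (forall a x y, bounded x -> bounded y ->
     T (rseq_add (rseq_scale a x) y) = rseq_add (rseq_scale a (T x)) (T y)).

Definition dunford_schwartz (T : rseq -> rseq) : Prop :=
  linear_on_linf T /\
  (forall x, summable x -> summable (T x) /\ norm1 (T x) <= norm1 x) /\
  (forall x, bounded x -> norm_inf (T x) <= norm_inf x).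

Definition ces_avg (T : rseq -> rseq) (n : nat) (x : rseq) : rseq :=
  fun i => n%:R^-1 * \sum_(k < n) iter k T x i.

End Defs.

(* Main.v *)
Require Import Defs.
From HB Require Import structures.
From mathcomp Require Import all_boot all_order all_algebra.
From mathcomp Require Import all_classical all_reals.
From mathcomp Require Import topology normedtype sequences.
From mathcomp Require Import lra ring.
Import Order.TTheory GRing.Theory Num.Theory.
Import numFieldNormedType.Exports.
Local Open Scope classical_set_scope.
Local Open Scope ring_scope.
Set Implicit Arguments. Unset Strict Implicit. Unset Printing Implicit Defensive.


Section Basics.
Variable R : realType.
Implicit Types (x y z u v w : rseq R).

Lemma supI_le (I : Type) (P : set I) (f : I -> R) (M : R) :
  P !=set0 -> (forall i, P i -> f i <= M) -> sup [set f i | i in P] <= M.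
Proof.
move=> [i0 Pi0] H; apply: ge_sup; first by exists (f i0), i0.
by move=> _ [i Pi <-]; apply: H.
Qed.

Lemma le_supI (I : Type) (P : set I) (f : I -> R) (M : R) i :
  (forall i, P i -> f i <= M) -> P i -> f i <= sup [set f i | i in P].
Proof.
move=> H Pi; apply: sup_upper_bound; last by exists i.
split; first by exists (f i), i.
by exists M => _ [j Pj <-]; apply: H.
Qed.

Lemma sup_adhI (I : Type) (P : set I) (f : I -> R) (M : R) (e : R) :
  0 < e -> P !=set0 -> (forall i, P i -> f i <= M) ->
  exists2 i, P i & sup [set f i | i in P] - e < f i.
Proof.
move=> e0 [i0 Pi0] H.
have [_ [j Pj <-] lt] := @sup_adherent R [set f i | i in P] e e0
  (conj (ex_intro _ (f i0) (ex_intro2 _ _ i0 Pi0 erefl))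
        (ex_intro _ M (fun _ '(ex_intro2 j Pj fj) => eq_ind _ (fun t => t <= M) (H j Pj) _ fj))).
by exists j.
Qed.

Lemma infI_le (I : Type) (P : set I) (f : I -> R) (m : R) i :
  (forall i, P i -> m <= f i) -> P i -> inf [set f i | i in P] <= f i.
Proof.
move=> H Pi; apply: ge_inf; last by exists i.
by exists m => _ [j Pj <-]; apply: H.
Qed.

Lemma le_infI (I : Type) (P : set I) (f : I -> R) (m : R) :
  P !=set0 -> (forall i, P i -> m <= f i) -> m <= inf [set f i | i in P].
Proof.
move=> [i0 Pi0] H; apply: lb_le_inf; first by exists (f i0), i0.
by move=> _ [j Pj <-]; apply: H.
Qed.

Lemma bounded_ge0 x M : (forall n, `|x n| <= M) -> 0 <= M.
Proof. by move=> H; apply: le_trans (H 0%N). Qed.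

Lemma norm_inf_ge x n : bounded x -> `|x n| <= norm_inf x.
Proof. by move=> [M HM]; apply: (@le_supI nat setT (fun n => `|x n|) M). Qed.

Lemma norm_inf_le x M : (forall n, `|x n| <= M) -> norm_inf x <= M.
Proof. by move=> H; apply: supI_le => //; exists 0%N. Qed.

Lemma norm_inf_ge0 x : bounded x -> 0 <= norm_inf x.
Proof. by move=> bx; apply: le_trans (norm_inf_ge 0 bx). Qed.

End Basics.


Section Lin.
Variable R : realType.
Implicit Types (x y z u v w : rseq R).

Lemma bounded_add u v : bounded u -> bounded v -> bounded (rseq_add u v).
Proof.
move=> [M HM] [N HN]; exists (M + N) => n; rewrite /rseq_add.
by apply: le_trans (ler_normD _ _) _; apply: lerD.
Qed.

Lemma bounded_scale a u : bounded u -> bounded (rseq_scale a u).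
Proof.
move=> [M HM]; exists (`|a| * M) => n; rewrite /rseq_scale normrM.
by apply: ler_wpM2l.
Qed.

Lemma bounded_sub u v : bounded u -> bounded v -> bounded (rseq_sub u v).
Proof.
move=> [M HM] [N HN]; exists (M + N) => n; rewrite /rseq_sub.
by apply: le_trans (ler_normB _ _) _; apply: lerD.
Qed.

Lemma bounded0 : bounded (fun _ : nat => 0 : R).
Proof. by exists 0 => n; rewrite normr0. Qed.

Variable T : rseq R -> rseq R.
Variable Tlin : linear_on_linf T.
Variable Tinf : forall x, bounded x -> norm_inf (T x) <= norm_inf x.

Lemma Tbd x : bounded x -> bounded (T x).
Proof. by case: Tlin => H _; apply: H. Qed.

Lemma T0 : T (fun _ => 0) = (fun _ => 0).
Proof.
case: Tlin => _ H.
have := H 1 _ _ bounded0 bounded0.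
have -> : rseq_add (rseq_scale 1 (fun _ : nat => 0 : R)) (fun _ => 0) = (fun _ => 0).
  by apply: funext => n; rewrite /rseq_add /rseq_scale mulr0 addr0.
move=> E; apply: funext => n; move: (congr1 (fun f => f n) E).
rewrite /rseq_add /rseq_scale /=; lra.
Qed.

Lemma TD u v : bounded u -> bounded v -> T (rseq_add u v) = rseq_add (T u) (T v).
Proof.
case: Tlin => _ H bu bv; have := H 1 _ _ bu bv.
have -> : rseq_add (rseq_scale 1 u) v = rseq_add u v.
  by apply: funext => n; rewrite /rseq_add /rseq_scale mul1r.
move=> ->; apply: funext => n; by rewrite /rseq_add /rseq_scale mul1r.
Qed.

Lemma TZ a u : bounded u -> T (rseq_scale a u) = rseq_scale a (T u).
Proof.
case: Tlin => _ H bu; have := H a _ _ bu bounded0.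
have -> : rseq_add (rseq_scale a u) (fun _ => 0) = rseq_scale a u.
  by apply: funext => n; rewrite /rseq_add addr0.
move=> ->; rewrite T0; apply: funext => n; by rewrite /rseq_add addr0.
Qed.

Lemma TB u v : bounded u -> bounded v -> T (rseq_sub u v) = rseq_sub (T u) (T v).
Proof.
move=> bu bv.
have -> : rseq_sub u v = rseq_add u (rseq_scale (-1) v).
  by apply: funext => n; rewrite /rseq_sub /rseq_add /rseq_scale mulN1r.
rewrite TD // ?TZ //; last exact: bounded_scale.
by apply: funext => n; rewrite /rseq_sub /rseq_add /rseq_scale mulN1r.
Qed.

Lemma Tcomb a u v : bounded u -> bounded v ->
  T (rseq_add (rseq_scale a u) v) = rseq_add (rseq_scale a (T u)) (T v).
Proof. by case: Tlin => _ H; apply: H. Qed.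

Lemma iter_bd k x : bounded x -> bounded (iter k T x).
Proof. by elim: k => //= k IH bx; apply: Tbd; apply: IH. Qed.

Lemma iter_norm k x : bounded x -> norm_inf (iter k T x) <= norm_inf x.
Proof.
elim: k => //= k IH bx; apply: le_trans (Tinf _) (IH bx).
exact: iter_bd.
Qed.

Lemma iter_pt k x n : bounded x -> `|iter k T x n| <= norm_inf x.
Proof.
move=> bx; apply: le_trans (iter_norm k bx).
by apply: norm_inf_ge; apply: iter_bd.
Qed.

Lemma T_pt x n : bounded x -> `|T x n| <= norm_inf x.
Proof. exact: (iter_pt 1). Qed.

Lemma iter_comb k a u v : bounded u -> bounded v ->
  iter k T (rseq_add (rseq_scale a u) v) =
  rseq_add (rseq_scale a (iter k T u)) (iter k T v).
Proof.
move=> bu bv; elim: k => [|k IH] //=; rewrite IH Tcomb //; exact: iter_bd.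
Qed.

Lemma iter_sub k u v : bounded u -> bounded v ->
  iter k T (rseq_sub u v) = rseq_sub (iter k T u) (iter k T v).
Proof.
move=> bu bv; elim: k => [|k IH] //=; rewrite IH TB //; exact: iter_bd.
Qed.

Lemma ces_pt n x i : bounded x -> `|ces_avg T n x i| <= norm_inf x.
Proof.
move=> bx; rewrite /ces_avg; case: n => [|n].
  by rewrite big_ord0 mulr0 normr0; apply: norm_inf_ge0.
rewrite normrM ger0_norm ?invr_ge0 ?ler0n //.
rewrite ler_pdivrMl ?ltr0n //.
apply: le_trans (ler_norm_sum _ _ _) _.
apply: le_trans (ler_sum (I := 'I_n.+1) _ (fun k _ => iter_pt k i bx)) _.
by rewrite sumr_const card_ord mulr_natl.
Qed.

Lemma ces_sub n u v i : bounded u -> bounded v ->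
  ces_avg T n (rseq_sub u v) i = ces_avg T n u i - ces_avg T n v i.
Proof.
move=> bu bv; rewrite /ces_avg -mulrBr -sumrB; congr (_ * _).
by apply: eq_bigr => k _; rewrite iter_sub.
Qed.

End Lin.


Section Seqs.
Variable R : realType.
Implicit Types (x y z u v w : rseq R).

Definition c0 x := forall e : R, 0 < e -> exists N, forall m, (N <= m)%N -> `|x m| <= e.
Definition trunc (N : nat) x : rseq R := fun m => if (m < N)%N then x m else 0.

Lemma sum_prefix_mono (f : nat -> R) M N : (forall i, 0 <= f i) -> (M <= N)%N ->
  \sum_(i < M) f i <= \sum_(i < N) f i.
Proof.
move=> f0 /subnKC <-; elim: (N - M)%N => [|k IH]; first by rewrite addn0.
by rewrite addnS big_ord_recr /=; apply: le_trans IH _; rewrite lerDl.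
Qed.

Lemma sum_prefix_abs (x : rseq R) M N : (M <= N)%N ->
  \sum_(i < M) `|x i| <= \sum_(i < N) `|x i|.
Proof. exact: (@sum_prefix_mono (fun i => `|x i|) _ _ (fun i => normr_ge0 _)). Qed.

Lemma sum_list_split (f : nat -> R) (S : seq nat) M :
  uniq S -> (forall i, i \in S -> (i < M)%N) ->
  \sum_(i < M) f i = \sum_(i <- S) f i + \sum_(0 <= i < M | i \notin S) f i.
Proof.
move=> uS SM.
have -> : \sum_(i < M) f i = \sum_(0 <= i < M) f i by rewrite big_mkord.
rewrite (bigID (fun i => i \in S)) /=.
congr (_ + _).
rewrite -big_filter; apply: perm_big; apply: uniq_perm.
- by apply: filter_uniq; apply: iota_uniq.
- exact: uS.
by move=> i; rewrite mem_filter mem_iota /= add0n subn0; case iS: (i \in S) => //=; rewrite SM.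
Qed.

Lemma sum_list_le_prefix (f : nat -> R) (S : seq nat) M : (forall i, 0 <= f i) ->
  uniq S -> (forall i, i \in S -> (i < M)%N) ->
  \sum_(i <- S) f i <= \sum_(i < M) f i.
Proof.
move=> f0 uS SM; rewrite (sum_list_split f uS SM) lerDl; exact: sumr_ge0.
Qed.

Lemma summable_bd x : summable x -> bounded x.
Proof.
move=> [M HM]; exists M => n; apply: le_trans (HM n.+1).
by rewrite big_ord_recr /= lerDr; apply: sumr_ge0.
Qed.

Lemma summable_c0 x : summable x -> c0 x.
Proof.
move=> [M HM] e e0; apply: contrapT => nH.
have H : forall N, exists m, (N <= m)%N /\ e < `|x m|.
  move=> N; apply: contrapT => nm; apply: nH; exists N => m Nm.
  by rewrite leNgt; apply/negP => lt; apply: nm; exists m.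
have HK : forall K : nat, exists P, K%:R * e <= \sum_(i < P) `|x i|.
  elim=> [|K [P HP]]; first by exists 0%N; rewrite mul0r big_ord0.
  have [m [Pm em]] := H P; exists m.+1.
  rewrite big_ord_recr /= -addn1 natrD mulrDl mul1r.
  apply: lerD (ltW em); apply: le_trans HP _.
  exact: (@sum_prefix_mono (fun i => `|x i|) _ _ (fun i => normr_ge0 _) Pm).

have M0 : 0 <= M by apply: le_trans (HM 0%N); rewrite big_ord0.
have [P HP] := HK (Num.bound (M / e)).
have := archi_boundP (divr_ge0 M0 (ltW e0)).
rewrite ltr_pdivrMr // => lt.
have := le_lt_trans (HM P) (lt_le_trans lt HP); by rewrite ltxx.
Qed.

Lemma trunc_bd N x : bounded x -> bounded (trunc N x).
Proof.
move=> [M HM]; exists M => n; rewrite /trunc; case: ifP => // _.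
by rewrite normr0; apply: bounded_ge0 HM.
Qed.

Lemma trunc_summable N x : summable (trunc N x).
Proof.
exists (\sum_(i < N) `|x i|) => P.
have -> : \sum_(i < P) `|trunc N x i| = \sum_(i < minn P N) `|x i|.
  case: (leqP P N) => PN.
    apply: eq_bigr => i _; rewrite /trunc.
    by rewrite (leq_trans (ltn_ord i) PN).
  rewrite -(subnKC (ltnW PN)) big_split_ord /=.
  rewrite [X in _ + X]big1 ?addr0; last by move=> i _; rewrite /trunc ltnNge leq_addr normr0.
  by apply: eq_bigr => i _; rewrite /trunc (ltn_ord i).
exact: sum_prefix_abs (geq_minr _ _).
Qed.

Lemma trunc_close x e : c0 x -> 0 < e -> exists N,
  forall N', (N <= N')%N -> forall m, `|rseq_sub x (trunc N' x) m| <= e.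
Proof.
move=> cx e0; have [N HN] := cx e e0; exists N => N' NN' m.
rewrite /rseq_sub /trunc; case: ifPn => mN; first by rewrite subrr normr0 ltW.
rewrite subr0; apply: HN; rewrite -ltnNge in mN.
by rewrite leqNgt; apply/negP => mN0; move: (leq_trans (leq_trans mN0 NN') mN); rewrite ltnn.
Qed.

Lemma norm1_ge z N : summable z -> \sum_(i < N) `|z i| <= norm1 z.
Proof.
move=> [M HM]; exact: (@le_supI R nat setT (fun N => \sum_(i < N) `|z i|) M N (fun i _ => HM i)).
Qed.

Lemma norm1_list z (S : seq nat) : summable z -> uniq S ->
  \sum_(i <- S) `|z i| <= norm1 z.
Proof.
move=> sz uS; apply: le_trans (norm1_ge (\sum_(i <- S) i).+1 sz).
apply: sum_list_le_prefix => // i iS.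
rewrite ltnS; rewrite (big_rem i iS) /=; exact: leq_addr.
Qed.

Lemma norm1_fin u N : (forall m, (N <= m)%N -> u m = 0) ->
  norm1 u <= \sum_(i < N) `|u i|.
Proof.
move=> uN; apply: supI_le; first by exists 0%N.
move=> P _; case: (leqP P N) => PN; first exact: sum_prefix_abs.
rewrite -(subnKC (ltnW PN)) big_split_ord /= [X in _ + X]big1 ?addr0 //.
by move=> i _; rewrite uN ?normr0 // leq_addr.
Qed.

Variable T : rseq R -> rseq R.
Variable Tlin : linear_on_linf T.
Variable Tinf : forall x, bounded x -> norm_inf (T x) <= norm_inf x.
Variable Tl1 : forall x, summable x -> summable (T x) /\ norm1 (T x) <= norm1 x.

Lemma T_c0 x : bounded x -> c0 x -> c0 (T x).
Proof.
move=> bx cx e e0.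
have e20 : 0 < e / 2 by apply: divr_gt0.
have [N HN] := trunc_close cx e20.
have [N' HN'] := summable_c0 (proj1 (Tl1 (trunc_summable N x))) e20.
exists N' => m Nm.
have bt := trunc_bd N bx.
have := T_pt Tlin Tinf m (bounded_sub bx bt).
rewrite TB // /rseq_sub => h1.
have h2 : norm_inf (rseq_sub x (trunc N x)) <= e / 2.
  by apply: norm_inf_le => n; apply: HN.
have h3 := HN' m Nm.
have := ler_normD (T x m - T (trunc N x) m) (T (trunc N x) m).
rewrite subrK => h4.
apply: le_trans h4 _; rewrite [e]splitr; apply: lerD => //.
exact: le_trans h1 h2.
Qed.

End Seqs.


Lemma mem_le_sumn (F : seq nat) j : j \in F -> (j <= sumn F)%N.
Proof.
elim: F => //= a F IH; rewrite in_cons => /orP [/eqP -> | /IH h]; first exact: leq_addr.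
by apply: leq_trans h _; apply: leq_addl.
Qed.

Lemma fresh_notin (F : seq nat) m : (sumn F < m)%N -> m \notin F.
Proof.
move=> lt; apply/negP => /mem_le_sumn h.
by move: (leq_trans lt h); rewrite ltnn.
Qed.

Lemma seq_argmin (T : eqType) (R : realType) (f : T -> R) (S : seq T) :
  S != [::] -> exists2 m0, m0 \in S & forall m, m \in S -> f m0 <= f m.
Proof.
elim: S => // a S IH _; case: (eqVneq S [::]) => [-> | /IH [m0 m0S H]].
  by exists a; rewrite ?mem_seq1 // => m; rewrite mem_seq1 => /eqP ->.
case: (leP (f a) (f m0)) => fa.
  exists a; first exact: mem_head.
  move=> m; rewrite in_cons => /orP [/eqP -> // | /H]; exact: le_trans.
exists m0; first by rewrite in_cons m0S orbT.
move=> m; rewrite in_cons => /orP [/eqP -> | /H //]; exact: ltW.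
Qed.

Lemma seq_argmax (T : eqType) (R : realType) (f : T -> R) (S : seq T) :
  S != [::] -> exists2 m0, m0 \in S & forall m, m \in S -> f m <= f m0.
Proof.
move=> /(seq_argmin (fun t => - f t)) [m0 m0S H]; exists m0 => // m /H.
by rewrite lerN2.
Qed.

Section Xstar.
Variable R : realType.
Implicit Types (x y z u v w : rseq R).

Definition sF x (F : seq nat) := sup [set `|x m| | m in [set m | m \notin F]].

Lemma xstarE x n : xstar x n = inf [set sF x F | F in [set F : seq nat | (size F <= n)%N]].
Proof. by []. Qed.

Lemma sF_ub x F m : bounded x -> m \notin F -> `|x m| <= sF x F.
Proof.
move=> [M HM] mF; rewrite /sF.
exact: (@le_supI R nat [set m | m \notin F] (fun m => `|x m|) M m (fun i _ => HM i)).
Qed.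

Lemma sF_le x F B : (forall m, m \notin F -> `|x m| <= B) -> sF x F <= B.
Proof.
move=> H; apply: supI_le => //; exists (sumn F).+1; exact: fresh_notin.
Qed.

Lemma sF_adh x F e : bounded x -> 0 < e -> exists2 m, m \notin F & sF x F - e < `|x m|.
Proof.
move=> [M HM] e0; apply: (@sup_adhI R nat [set m | m \notin F] (fun m => `|x m|) M e e0).
- by exists (sumn F).+1; exact: fresh_notin.
- by move=> i _; apply: HM.
Qed.

Lemma sF_ge0 x F : bounded x -> 0 <= sF x F.
Proof.
move=> bx; apply: le_trans (@sF_ub x F (sumn F).+1 bx (fresh_notin (ltnSn _))).
exact: normr_ge0.
Qed.

Lemma xstar_lb x n b : (forall F : seq nat, (size F <= n)%N -> b <= sF x F) -> b <= xstar x n.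
Proof.
move=> H; rewrite xstarE; apply: le_infI; first by exists [::].
by move=> F; apply: H.
Qed.

Lemma xstar_ub x n F : bounded x -> (size F <= n)%N -> xstar x n <= sF x F.
Proof.
move=> bx sF0; rewrite xstarE.
by apply: (@infI_le R (seq nat) _ (fun F => sF x F) 0 F) => // G _; apply: sF_ge0.
Qed.

Lemma xstar_ge0 x n : bounded x -> 0 <= xstar x n.
Proof. by move=> bx; apply: xstar_lb => F _; apply: sF_ge0. Qed.

Lemma xstar_le_bound x n M : bounded x -> (forall m, `|x m| <= M) -> xstar x n <= M.
Proof.
move=> bx H; apply: le_trans (xstar_ub bx (isT : (size [::] <= n)%N)) _.
by apply: sF_le.
Qed.

Definition Phi x k := \sum_(i < k) xstar x i.

Lemma Phi_mono x k k' : bounded x -> (k <= k')%N -> Phi x k <= Phi x k'.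
Proof.
move=> bx /subnKC <-; rewrite /Phi; elim: (k' - k)%N => [|j IH]; first by rewrite addn0.
by rewrite addnS big_ord_recr /=; apply: le_trans IH _; rewrite lerDl xstar_ge0.
Qed.

Lemma Phi_ge0 x k : bounded x -> 0 <= Phi x k.
Proof. by move=> bx; apply: sumr_ge0 => i _; apply: xstar_ge0. Qed.

Lemma sum_le_Phi x (S : seq nat) : bounded x -> uniq S ->
  \sum_(m <- S) `|x m| <= Phi x (size S).
Proof.
move=> bx; move: {2}(size S) (erefl (size S)) => k; elim: k S => [|k IH] S sS uS.
  by move/eqP: sS; rewrite size_eq0 => /eqP ->; rewrite big_nil /Phi big_ord0.
have S0 : S != [::] by apply/negP => /eqP SE; rewrite SE in sS.
have [m0 m0S Hm0] := seq_argmin (fun m => `|x m|) S0.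
rewrite (big_rem m0 m0S) /= sS /Phi big_ord_recr /= addrC; apply: lerD.
  have sr : size (rem m0 S) = k by rewrite size_rem // sS.
  by have := IH _ sr (rem_uniq m0 uS); rewrite sr.
apply: xstar_lb => F sFk.
have [m mS mF] : exists2 m, m \in S & m \notin F.
  apply: contrapT => nE.
  have sub : {subset S <= F}.
    move=> m mS; apply: contrapT => /negP mF; apply: nE; by exists m.
  by have := uniq_leq_size uS sub; rewrite sS leqNgt ltnS sFk.
exact: le_trans (Hm0 m mS) (sF_ub bx mF).
Qed.

Lemma Phi_le_sum x k e : bounded x -> 0 < e ->
  exists S : seq nat, [/\ uniq S, size S = k &
     Phi x k <= \sum_(m <- S) `|x m| + k%:R * e].
Proof.
move=> bx e0; elim: k => [|k [S [uS sS H]]].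
  by exists [::]; split => //; rewrite /Phi big_ord0 big_nil mul0r addr0.
have [m mS Hm] := sF_adh S bx e0.
exists (m :: S); split => //=; first by rewrite mS.
  by rewrite sS.
rewrite /Phi big_ord_recr /= big_cons -/(Phi x k).
have h := xstar_ub bx (eq_leq sS).
rewrite -addn1 natrD mulrDl mul1r.
have : xstar x k <= `|x m| + e by apply: le_trans h _; rewrite -lerBlDr ltW.
move: H; lra.
Qed.

End Xstar.


Lemma E_c0 (R : realType) (E : set (rseq R)) (normE : rseq R -> R) :
  symmetric_space E normE -> (exists z : rseq R, bounded z /\ ~ E z) ->
  forall x, E x -> c0 x.
Proof.
move=> [Ebd [_ [_ [_ [Escale [_ [_ [Esym _]]]]]]]] [z [[M HM] nEz]] x Ex.
apply: contrapT => ncx.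
have [e [e0 He]] : exists e : R, 0 < e /\ forall N, exists m, (N <= m)%N /\ e < `|x m|.
  apply: contrapT => nH; apply: ncx => e e0; apply: contrapT => nN.
  apply: nH; exists e; split => // N; apply: contrapT => nm; apply: nN; exists N => m Nm.
  by rewrite leNgt; apply/negP => lt; apply: nm; exists m.
have M0 : 0 <= M := bounded_ge0 HM.
have bx := Ebd x Ex.
apply: nEz; have [] := Esym z (rseq_scale (M / e) x) (Escale _ _ Ex) (ex_intro _ M HM) => //.
move=> n; apply: le_trans (xstar_le_bound n (ex_intro _ M HM) HM) _.
apply: xstar_lb => F _.
have [m [Fm em]] := He (sumn F).+1.
apply: le_trans (sF_ub (bounded_scale (M / e) bx) (fresh_notin Fm)).
rewrite /rseq_scale normrM ger0_norm ?divr_ge0 ?(ltW e0) //.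
apply: le_trans (_ : M / e * e <= _); first by rewrite divfK // gt_eqF.
by apply: ler_wpM2l (ltW em); apply: divr_ge0 => //; apply: ltW.
Qed.


Section Calderon.
Variable R : realType.
Implicit Types (x y z u v w : rseq R).

Lemma le_eps_mul (a b K : R) : 0 <= K -> (forall d, 0 < d -> a <= b + K * d) -> a <= b.
Proof.
move=> K0 H; apply/ler_addgt0Pr => e e0.
have K1 : 0 < K + 1 by lra.
apply: le_trans (H (e / (K + 1)) (divr_gt0 e0 K1)) _.
rewrite lerD2l mulrA ler_pdivrMr // mulrC ler_pM2l //; lra.
Qed.

Lemma sum_const_list (S : seq nat) (t : R) : \sum_(i <- S) t = (size S)%:R * t.
Proof.
elim: S => [|a S IH]; first by rewrite big_nil mul0r.
by rewrite big_cons IH /= -addn1 natrD mulrDl mul1r addrC.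
Qed.

Lemma norm_sub_sg (a t : R) : 0 <= t -> t <= `|a| -> `|a - Num.sg a * t| = `|a| - t.
Proof.
move=> t0 ta; have [a0|a0|a0] := ltrgtP a 0.
- rewrite ltr0_sg // mulN1r opprK; rewrite ltr0_norm // in ta.
  rewrite (ltr0_norm a0) ler0_norm; first by rewrite opprD.
  lra.
- rewrite gtr0_sg // mul1r; rewrite gtr0_norm // in ta.
  rewrite (gtr0_norm a0) ger0_norm //; lra.
- rewrite a0 normr0 in ta *; have -> : t = 0 by lra. by rewrite sgr0 mul0r subr0 normr0.
Qed.

Definition Maj (c : nat -> R) y := forall S : seq nat, uniq S -> \sum_(m <- S) `|y m| <= c (size S).

Lemma top_list y N k : (k <= N)%N -> exists A : seq nat,
  [/\ uniq A, size A = k, (forall a, a \in A -> (a < N)%N) &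
      forall j, (j < N)%N -> j \notin A -> forall a, a \in A -> `|y j| <= `|y a|].
Proof.
elim: k => [|k IH] kN; first by exists [::].
have [A [uA sA AN top]] := IH (ltnW kN).
set C := [seq j <- iota 0 N | j \notin A].
have C0 : C != [::].
  apply/negP => /eqP C0.
  have sub : {subset iota 0 N <= A}.
    move=> j jN; apply: contrapT => /negP jA.
    have : j \in C by rewrite mem_filter jA jN.
    by rewrite C0.
  by have := uniq_leq_size (iota_uniq 0 N) sub; rewrite size_iota sA leqNgt kN.
have [m mC Hm] := seq_argmax (fun j => `|y j|) C0.
move: (mC); rewrite mem_filter mem_iota add0n /= => /andP [mA mN].
exists (m :: A); split => /=; first by rewrite mA uA.
- by rewrite sA.
- by move=> a; rewrite in_cons => /orP [/eqP -> // | /AN].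
move=> j jN; rewrite in_cons negb_or => /andP [jm jA] a.
rewrite in_cons => /orP [/eqP -> | aA]; last exact: top.
by apply: Hm; rewrite mem_filter jA mem_iota add0n jN.
Qed.

Variable T : rseq R -> rseq R.
Variable Tlin : linear_on_linf T.
Variable Tinf : forall x, bounded x -> norm_inf (T x) <= norm_inf x.
Variable Tl1 : forall x, summable x -> summable (T x) /\ norm1 (T x) <= norm1 x.

Lemma fin_summable u N : (forall m, (N <= m)%N -> u m = 0) -> summable u.
Proof.
move=> uN; have -> : u = trunc N u; last exact: trunc_summable.
apply: funext => m; rewrite /trunc; case: ltnP => // /uN; done.
Qed.

Lemma sum_iota (f : nat -> R) N : \sum_(i < N) f i = \sum_(i <- iota 0 N) f i.
Proof. by rewrite -(big_mkord xpredT) /index_iota subn0. Qed.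

Lemma calderon_fin (c : nat -> R) y N :
  (forall a b, (a <= b)%N -> c a <= c b) ->
  bounded y -> (forall m, (N <= m)%N -> y m = 0) -> Maj c y -> Maj c (T y).
Proof.
move=> cmono bdy yN My S' uS'.
set k := size S'.
have sy := fin_summable yN.
case: (leqP N k) => Nk.
  apply: le_trans (norm1_list (proj1 (Tl1 sy)) uS') _.
  apply: le_trans (proj2 (Tl1 sy)) _.
  apply: le_trans (norm1_fin yN) _.
  rewrite (sum_iota (fun i => `|y i|)); apply: le_trans (My _ (iota_uniq 0 N)) _.
  by rewrite size_iota; apply: cmono.
case: (posnP k) => k0.
  have S'0 : S' = [::] by apply/eqP; rewrite -size_eq0 -/k k0.
  by rewrite k0 S'0 big_nil; move: (My [::] isT); rewrite big_nil.
have [A [uA sA AN top]] := top_list y (ltnW Nk).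
have A0 : A != [::] by apply/negP => /eqP A0; move: sA; rewrite A0 /= => k0'; rewrite -k0' in k0.
have [m0 m0A Hm0] := seq_argmin (fun j => `|y j|) A0.
set t := `|y m0|.
have t0 : 0 <= t := normr_ge0 _.
set v : rseq R := fun j => if j \in A then Num.sg (y j) * t else y j.
set u : rseq R := fun j => if j \in A then y j - Num.sg (y j) * t else 0.
have yuv : y = rseq_add u v.
  by apply: funext => j; rewrite /rseq_add /u /v; case: ifP => _; rewrite ?subrK ?add0r.
have vt : forall j, `|v j| <= t.
  move=> j; rewrite /v; case: ifPn => jA.
    rewrite normrM normr_sg (ger0_norm t0); case: (y j != 0) => /=; rewrite ?mul1r ?mul0r //.
  case: (ltnP j N) => jN; first exact: top jN jA m0 m0A.
  by rewrite yN // normr0.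
have bv : bounded v by exists t.
have uN : forall m, (N <= m)%N -> u m = 0.
  move=> m Nm; rewrite /u; case: ifPn => // mA.
  by move: (AN m mA); rewrite ltnNge Nm.
have su := fin_summable uN.
have bu := summable_bd su.
have H1 : \sum_(j <- S') `|T y j| <= \sum_(j <- S') `|T u j| + \sum_(j <- S') `|T v j|.
  rewrite -big_split /=; apply: ler_sum => j _.
  by rewrite yuv TD // /rseq_add; apply: ler_normD.
have H2 : \sum_(j <- S') `|T u j| <= \sum_(j <- A) `|y j| - k%:R * t.
  apply: le_trans (norm1_list (proj1 (Tl1 su)) uS') _.
  apply: le_trans (proj2 (Tl1 su)) _.
  apply: le_trans (norm1_fin uN) _.
  have Z : \sum_(0 <= i < N | i \notin A) `|u i| = 0.
    by apply: big1 => i iA; rewrite /u (negbTE iA) normr0.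
  rewrite (sum_list_split (fun i => `|u i|) uA AN) Z addr0.
  rewrite -sA -sum_const_list -sumrB [X in X <= _]big_seq [X in _ <= X]big_seq; apply: ler_sum => j jA.
  rewrite /u jA norm_sub_sg //; exact: Hm0.
have H3 : \sum_(j <- S') `|T v j| <= k%:R * t.
  rewrite -sum_const_list; apply: ler_sum => j _.
  apply: le_trans (T_pt Tlin Tinf j bv) _.
  exact: norm_inf_le.
have H4 := My A uA; rewrite sA in H4.
move: H1 H2 H3 H4; lra.
Qed.

Lemma trunc_Maj c y N : Maj c y -> Maj c (trunc N y).
Proof.
move=> My S uS; apply: le_trans (My S uS); apply: ler_sum => j _.
rewrite /trunc; case: ifP => _ //; rewrite normr0; exact: normr_ge0.
Qed.

Lemma calderon (c : nat -> R) y :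
  (forall a b, (a <= b)%N -> c a <= c b) ->
  bounded y -> c0 y -> Maj c y -> Maj c (T y).
Proof.
move=> cmono bdy cy My S uS.
apply: (@le_eps_mul _ _ (size S)%:R) => // d d0.
have [N HN] := trunc_close cy d0.
have bt := trunc_bd N bdy.
have tN : forall m, (N <= m)%N -> trunc N y m = 0.
  by move=> m Nm; rewrite /trunc ltnNge Nm.
have H := calderon_fin cmono bt tN (trunc_Maj N My) uS.
apply: le_trans (_ : _ <= \sum_(j <- S) (`|T (trunc N y) j| + d)) _.
  apply: ler_sum => j _.
  have h1 := T_pt Tlin Tinf j (bounded_sub bdy bt).
  rewrite TB // /rseq_sub in h1.
  have h2 : norm_inf (rseq_sub y (trunc N y)) <= d by apply: norm_inf_le; apply: HN.
  have := ler_normD (T y j - T (trunc N y) j) (T (trunc N y) j).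
  rewrite subrK => h3; move: (le_trans h1 h2) h3; lra.
by rewrite big_split /= sum_const_list lerD2r.
Qed.

End Calderon.


Section Schur.
Variable R : realType.
Implicit Types (x y z u v w : rseq R).

Definition q w : R := sup [set \sum_(i < N) (w i) ^+ 2 | N in [set: nat]].

Lemma q_bd w : summable w -> exists B, forall N, \sum_(i < N) (w i) ^+ 2 <= B.
Proof.
move=> sw; have [M0 HM0] := summable_bd sw; have [M HM] := sw.
exists (M0 * M) => N; apply: le_trans (_ : _ <= \sum_(i < N) M0 * `|w i|) _.
  apply: ler_sum => i _; rewrite -real_normK ?num_real // expr2; apply: ler_wpM2r => //.
by rewrite -mulr_sumr; apply: ler_wpM2l (HM N); apply: bounded_ge0 HM0.
Qed.

Lemma q_ge w N : summable w -> \sum_(i < N) (w i) ^+ 2 <= q w.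
Proof.
move=> /q_bd [B HB].
exact: (@le_supI R nat setT (fun N => \sum_(i < N) (w i) ^+ 2) B N (fun i _ => HB i)).
Qed.

Lemma q_le w B : (forall N, \sum_(i < N) (w i) ^+ 2 <= B) -> q w <= B.
Proof. by move=> H; apply: supI_le; [exists 0%N | move=> N _; apply: H]. Qed.

Lemma q_adh w e : summable w -> 0 < e -> exists N, q w - e < \sum_(i < N) (w i) ^+ 2.
Proof.
move=> /q_bd [B HB] e0.
have [N _ HN] := @sup_adhI R nat setT (fun N => \sum_(i < N) (w i) ^+ 2) B e e0
  (ex_intro _ 0%N I) (fun i _ => HB i).
by exists N.
Qed.

Lemma q_ge0 w : summable w -> 0 <= q w.
Proof.
move=> sw; apply: le_trans (q_ge 0 sw); by rewrite big_ord0.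
Qed.

Definition ev (j : nat) : rseq R := fun m => if m == j then 1 else 0.

Lemma ev_bd j : bounded (ev j).
Proof. by exists 1 => m; rewrite /ev; case: ifP; rewrite ?normr1 ?normr0. Qed.

Lemma ev_vanish j m : (j.+1 <= m)%N -> ev j m = 0.
Proof. by move=> jm; rewrite /ev; case: eqP => // mj; rewrite mj ltnn in jm. Qed.

Lemma ev_summable j : summable (ev j).
Proof. exact: (fin_summable (@ev_vanish j)). Qed.

Lemma ev_norm1 j : norm1 (ev j) <= 1.
Proof.
apply: le_trans (norm1_fin (@ev_vanish j)) _.
rewrite big_ord_recr /= big1 ?add0r; first by rewrite /ev eqxx normr1.
by move=> i _; rewrite /ev; case: eqP => [h|]; [move: (ltn_ord i); rewrite h ltnn | rewrite normr0].
Qed.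

Lemma CS_weighted (N : nat) (a b : nat -> R) :
  (\sum_(j < N) a j * b j) ^+ 2 <=
  (\sum_(j < N) `|a j|) * (\sum_(j < N) `|a j| * (b j) ^+ 2).
Proof.
elim: N => [|N IH]; first by rewrite !big_ord0 expr0n /= mul0r.
rewrite !big_ord_recr /=.
set S := \sum_(j < N) a j * b j in IH *.
set P := \sum_(j < N) `|a j| in IH *.
set Q := \sum_(j < N) `|a j| * b j ^+ 2 in IH *.
have P0 : 0 <= P by apply: sumr_ge0 => j _.
have Q0 : 0 <= Q by apply: sumr_ge0 => j _; apply: mulr_ge0 => //; apply: sqr_ge0.
set al := a N; set be := b N.
have key : 2 * `|al| * `|be| * `|S| <= `|al| * (be ^+ 2 * P + Q).
  have k0 : 2 * `|be| * `|S| <= be ^+ 2 * P + Q.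
    have Y2 : `|S| ^+ 2 <= P * Q by rewrite real_normK ?num_real.
    rewrite -(real_normK (num_real be)).
    have X0 : 0 <= `|be| := normr_ge0 _.
    have Y0 : 0 <= `|S| := normr_ge0 _.
    move: Y2 X0 Y0; set X := `|be|; set Y := `|S| => Y2 X0 Y0.
    have [P0'|P0'|P0'] := ltrgtP P 0.
    - lra.
    - have h := sqr_ge0 (X * P - Y); rewrite !expr2 in h Y2 *; nra.
    - rewrite P0' mul0r in Y2; rewrite P0' mulr0 add0r.
      rewrite expr2 in Y2; have -> : Y = 0 by nra.
      rewrite mulr0 ?mul0r; lra.
  have a0 : 0 <= `|al| := normr_ge0 _.
  have := ler_wpM2l a0 k0; rewrite !mulrA [`|al| * 2]mulrC.
  done.
have e2 : (S + al * be) ^+ 2 <= S ^+ 2 + 2 * `|al| * `|be| * `|S| + al ^+ 2 * be ^+ 2.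
  have h : S * (al * be) <= `|al| * `|be| * `|S|.
    by apply: le_trans (ler_norm _) _; rewrite !normrM mulrC.
  rewrite sqrrD mulr2n exprMn; move: h; lra.
have e3 : al ^+ 2 * be ^+ 2 <= `|al| * (`|al| * be ^+ 2).
  by rewrite mulrA -expr2 real_normK ?num_real.
apply: le_trans e2 _.
have : S ^+ 2 <= P * Q := IH.
move: key e3; set X := `|al|; set Y := be ^+ 2; move=> key e3 IH'.
have X0 : 0 <= X by apply: normr_ge0.
nra.
Qed.

Variable T : rseq R -> rseq R.
Variable Tlin : linear_on_linf T.
Variable Tinf : forall x, bounded x -> norm_inf (T x) <= norm_inf x.
Variable Tl1 : forall x, summable x -> summable (T x) /\ norm1 (T x) <= norm1 x.

Definition tm i j := T (ev j) i.

Lemma T_expand w N i : bounded w -> T (trunc N w) i = \sum_(j < N) w j * tm i j.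
Proof.
move=> bw; elim: N => [|N IH].
  have -> : trunc 0 w = (fun _ => 0) by apply: funext => m.
  by rewrite (T0 Tlin) big_ord0.
have -> : trunc N.+1 w = rseq_add (rseq_scale (w N) (ev N)) (trunc N w).
  apply: funext => m; rewrite /rseq_add /rseq_scale /trunc /ev ltnS leq_eqVlt.
  case: eqP => [-> | _] /=; first by rewrite ltnn mulr1 addr0.
  by rewrite mulr0 add0r.
rewrite (Tcomb Tlin); [| exact: ev_bd | exact: trunc_bd].
rewrite /rseq_add /rseq_scale big_ord_recr addrC IH; congr (_ + _).
Qed.

Lemma row_bound i N : \sum_(j < N) `|tm i j| <= 1.
Proof.
set z := trunc N (fun j => Num.sg (tm i j)).
have bz' : bounded (fun j => Num.sg (tm i j)).
  by exists 1 => j; rewrite normr_sg; case: (_ != 0).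
have bz := trunc_bd N bz'.
have := T_pt Tlin Tinf i bz; rewrite T_expand //.
have -> : \sum_(j < N) Num.sg (tm i j) * tm i j = \sum_(j < N) `|tm i j|.
  by apply: eq_bigr => j _; rewrite -normrEsg.
move=> h; apply: le_trans (ler_norm _) (le_trans h _).
apply: norm_inf_le => m; rewrite /z /trunc; case: ifP => _; last by rewrite normr0.
by rewrite normr_sg; case: (_ != 0).
Qed.

Lemma col_bound j M : \sum_(i < M) `|tm i j| <= 1.
Proof.
have [sT nT] := Tl1 (ev_summable j).
exact: le_trans (norm1_ge M sT) (le_trans nT (ev_norm1 j)).
Qed.

Lemma schur_fin w N M : bounded w ->
  \sum_(i < M) (T (trunc N w) i) ^+ 2 <= \sum_(j < N) (w j) ^+ 2.
Proof.
move=> bw.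
apply: le_trans (_ : _ <= \sum_(i < M) \sum_(j < N) `|tm i j| * (w j) ^+ 2) _.
  apply: ler_sum => i _; rewrite T_expand //.
  have := CS_weighted N (tm i) w.
  under eq_bigr do rewrite mulrC.
  move=> h; apply: le_trans h _.
  rewrite -[X in _ <= X]mul1r; apply: ler_wpM2r; last exact: row_bound.
  by apply: sumr_ge0 => j _; apply: mulr_ge0 => //; apply: sqr_ge0.
rewrite exchange_big /=; apply: ler_sum => j _.
rewrite -mulr_suml -[X in _ <= X]mul1r; apply: ler_wpM2r; last exact: col_bound.
exact: sqr_ge0.
Qed.

Lemma sq_diff (a b d B : R) : `|a - b| <= d -> `|a| <= B -> `|b| <= B ->
  a ^+ 2 <= b ^+ 2 + 2 * B * d.
Proof.
move=> hd ha hb.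
have h : a ^+ 2 - b ^+ 2 <= `|a - b| * `|a + b|.
  by rewrite -normrM; apply: le_trans (ler_norm _); rewrite subr_sqr.
have h2 : `|a + b| <= 2 * B by apply: le_trans (ler_normD _ _) _; lra.
have h3 : `|a - b| * `|a + b| <= d * (2 * B).
  by apply: ler_pM => //; apply: normr_ge0.
move: h h3; lra.
Qed.

Lemma q_T w : summable w -> q (T w) <= q w.
Proof.
move=> sw; have bw := summable_bd sw; have cw := summable_c0 sw.
apply: q_le => M.
set B := norm_inf w.
have B0 : 0 <= B := norm_inf_ge0 bw.
apply: (@le_eps_mul R _ _ (M%:R * (2 * B))); first by apply: mulr_ge0 => //; apply: mulr_ge0.
move=> d d0; have [N HN] := trunc_close cw d0.
have bt := trunc_bd N bw.
have h1 := schur_fin N M bw.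
apply: le_trans (_ : _ <= \sum_(i < M) ((T (trunc N w) i) ^+ 2 + 2 * B * d)) _.
  apply: ler_sum => i _; apply: sq_diff.
  - have := T_pt Tlin Tinf i (bounded_sub bw bt); rewrite (TB Tlin) // /rseq_sub => h.
    by apply: le_trans h _; apply: norm_inf_le; apply: HN.
  - exact: T_pt.
  - apply: le_trans (T_pt Tlin Tinf i bt) _; apply: norm_inf_le => m.
    rewrite /trunc; case: ifP => _; [exact: norm_inf_ge | by rewrite normr0].
rewrite big_split /= sumr_const card_ord -[(2 * B * d) *+ M]mulr_natl !mulrA lerD2r.
exact: le_trans h1 (q_ge N sw).
Qed.

End Schur.


Section Birkhoff.
Variable R : realType.
Implicit Types (x y z u v w : rseq R).

Definition comb (l : R) u v := rseq_add (rseq_scale l u) (rseq_scale (1 - l) v).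

Lemma summable_comb l u v : 0 <= l <= 1 -> summable u -> summable v -> summable (comb l u v).
Proof.
move=> /andP [l0 l1] [M1 H1] [M2 H2]; have l1' : 0 <= 1 - l by lra.
exists (l * M1 + (1 - l) * M2) => N.
apply: le_trans (_ : _ <= \sum_(i < N) (l * `|u i| + (1 - l) * `|v i|)) _.
  apply: ler_sum => i _; rewrite /comb /rseq_add /rseq_scale.
  apply: le_trans (ler_normD _ _) _; rewrite !normrM (ger0_norm l0) (ger0_norm l1'); lra.
rewrite big_split /= -!mulr_sumr; apply: lerD; apply: ler_wpM2l => //; [exact: H1 | exact: H2].
Qed.

Lemma q_comb l u v : 0 <= l <= 1 -> summable u -> summable v ->
  q (comb l u v) <= l * q u + (1 - l) * q v.
Proof.
move=> /andP [l0 l1] su sv; apply: q_le => N.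
apply: le_trans (_ : _ <= \sum_(i < N) (l * (u i) ^+ 2 + (1 - l) * (v i) ^+ 2)) _.
  apply: ler_sum => i _; rewrite /comb /rseq_add /rseq_scale.
  have h := sqr_ge0 (u i - v i).
  have h2 : 0 <= l * (1 - l) by apply: mulr_ge0; lra.
  have := mulr_ge0 h2 h; rewrite !expr2; nra.
rewrite big_split /= -!mulr_sumr; apply: lerD; apply: ler_wpM2l; try lra.
  exact: q_ge.
exact: q_ge.
Qed.

Lemma parallelogram u v e i : summable u -> summable v -> 0 < e ->
  ((u i - v i) / 2) ^+ 2 <= (q u + q v) / 2 - q (comb (1/2) u v) + e.
Proof.
move=> su sv e0.
have sm : summable (comb (1/2) u v) by apply: summable_comb => //; apply/andP; split; lra.
have [N0 HN0] := q_adh sm e0.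
set N' := maxn N0 i.+1.
have h1 : \sum_(k < N0) (comb (1/2) u v k) ^+ 2 <= \sum_(k < N') (comb (1/2) u v k) ^+ 2.
  apply: (@sum_prefix_mono R (fun k => (comb (1/2) u v k) ^+ 2)); last exact: leq_maxl.
  by move=> k; apply: sqr_ge0.
have h2 : ((u i - v i) / 2) ^+ 2 <= \sum_(k < N') ((u k - v k) / 2) ^+ 2.
  have := @sum_list_le_prefix R (fun k => ((u k - v k) / 2) ^+ 2) [:: i] N'
    (fun k => sqr_ge0 _) isT.
  rewrite big_seq1; apply => k; rewrite mem_seq1 => /eqP ->.
  exact: leq_maxr.
have h3 : \sum_(k < N') ((u k - v k) / 2) ^+ 2 =
   (\sum_(k < N') (u k) ^+ 2 + \sum_(k < N') (v k) ^+ 2) / 2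
   - \sum_(k < N') (comb (1/2) u v k) ^+ 2.
  rewrite -big_split /= mulr_suml -sumrB; apply: eq_bigr => k _.
  rewrite /comb /rseq_add /rseq_scale; rewrite !expr2; by field.
have h4 := q_ge N' su; have h5 := q_ge N' sv.
move: h1 h2 h3 h4 h5 HN0; lra.
Qed.

Variable T : rseq R -> rseq R.
Variable Tlin : linear_on_linf T.
Variable Tinf : forall x, bounded x -> norm_inf (T x) <= norm_inf x.
Variable Tl1 : forall x, summable x -> summable (T x) /\ norm1 (T x) <= norm1 x.

Lemma iter_summable k u : summable u -> summable (iter k T u).
Proof. by elim: k => //= k IH su; apply: (proj1 (Tl1 (IH su))). Qed.

Lemma q_iter k u : summable u -> q (iter k T u) <= q u.
Proof.
elim: k => //= k IH su; apply: le_trans _ (IH su).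
exact: (@q_T R T Tlin Tinf Tl1 _ (iter_summable k su)).
Qed.

Lemma iter_scale k a u : bounded u -> iter k T (rseq_scale a u) = rseq_scale a (iter k T u).
Proof.
move=> bu; elim: k => //= k ->; rewrite (TZ Tlin) //; exact: iter_bd.
Qed.

Lemma iter_combE k l u v : bounded u -> bounded v ->
  iter k T (comb l u v) = comb l (iter k T u) (iter k T v).
Proof.
move=> bu bv; rewrite /comb iter_comb //; last exact: bounded_scale.
by rewrite iter_scale.
Qed.

Lemma ces_comb n l u v i : bounded u -> bounded v ->
  ces_avg T n (comb l u v) i = l * ces_avg T n u i + (1 - l) * ces_avg T n v i.
Proof.
move=> bu bv; rewrite /ces_avg.
under eq_bigr do rewrite iter_combE //.
rewrite /comb /rseq_add /rseq_scale big_split /= -!mulr_sumr; lra.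
Qed.

Lemma ces_mul n u i : (0 < n)%N -> n%:R * ces_avg T n u i = \sum_(k < n) iter k T u i.
Proof.
move=> n0; rewrite /ces_avg mulrA mulfV ?mul1r //; by rewrite pnatr_eq0 -lt0n.
Qed.

Lemma tele (g : nat -> R) n : \sum_(k < n) (g k.+1 - g k) = g n - g 0%N.
Proof.
elim: n => [|n IH]; first by rewrite big_ord0 subrr.
by rewrite big_ord_recr /= IH; lra.
Qed.

Lemma ces_T n u i : bounded u -> (0 < n)%N ->
  n%:R * (ces_avg T n (T u) i - ces_avg T n u i) = iter n T u i - u i.
Proof.
move=> bu n0; rewrite mulrBr !ces_mul // -sumrB.
under eq_bigr do rewrite -iterSr.
by rewrite (tele (fun k => iter k T u i)).
Qed.

Lemma ces_S n u : bounded u ->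
  ces_avg T n.+2 u = comb (n.+1%:R / n.+2%:R) (ces_avg T n.+1 u) (iter n.+1 T u).
Proof.
move=> bu; apply: funext => i; rewrite /comb /rseq_add /rseq_scale /ces_avg.
rewrite [in LHS]big_ord_recr /=.
set S := \sum_(k < n.+1) iter k T u i.
have h1 : (n.+2%:R : R) != 0 by rewrite pnatr_eq0.
have h2 : (n.+1%:R : R) != 0 by rewrite pnatr_eq0.
have e : (n.+2%:R : R) = n.+1%:R + 1 by rewrite -natr1.
rewrite e in h1 *; field.
have p0 : (0 : R) <= n%:R := ler0n _ _.
apply/andP; split; apply/negP => /eqP; lra.
Qed.

Lemma ces_1 u : ces_avg T 1 u = u.
Proof.
by apply: funext => i; rewrite /ces_avg big_ord1 /= invr1 mul1r.
Qed.

End Birkhoff.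


Section Birk2.
Variable R : realType.
Implicit Types (x y z u v w : rseq R).
Variable T : rseq R -> rseq R.
Variable Tlin : linear_on_linf T.
Variable Tinf : forall x, bounded x -> norm_inf (T x) <= norm_inf x.
Variable Tl1 : forall x, summable x -> summable (T x) /\ norm1 (T x) <= norm1 x.
Variable x0 : rseq R.
Variable sx0 : summable x0.

Inductive inC : rseq R -> Prop :=
| C0 : inC x0
| CT y : inC y -> inC (T y)
| Cc (l : R) y z : 0 <= l <= 1 -> inC y -> inC z -> inC (comb l y z).

Let B := norm_inf x0.
Let bx0 := summable_bd sx0.

Lemma inC_prop : forall y, inC y -> [/\ summable y, (forall i, `|y i| <= B) &
  exists K, 0 <= K /\ forall n i, (0 < n)%N ->
     n%:R * `|ces_avg T n y i - ces_avg T n x0 i| <= K].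
Proof.
have B0 : 0 <= B := norm_inf_ge0 bx0.
move=> y0 Cy0; elim: Cy0 => [|y Cy [sy yB [K [K0 HK]]] | l y z l01 Cy [sy yB [K1 [K10 HK1]]] Cz [sz zB [K2 [K20 HK2]]]].
- split => //; first by move=> i; exact: norm_inf_ge.
  by exists 0; split => // n i _; rewrite subrr normr0 mulr0.
- have by' := summable_bd sy.
  have nyB : norm_inf y <= B := norm_inf_le yB.
  split; first exact: (proj1 (Tl1 sy)).
    by move=> i; apply: le_trans (T_pt Tlin Tinf i by') nyB.
  exists (K + 2 * B); split; first lra.
  move=> n i n0.
  have e1 := ces_T T i by' n0.
  have h1 : `|iter n T y i - y i| <= 2 * B.
    apply: le_trans (ler_normB _ _) _.
    have := iter_pt Tlin Tinf n i by'; have := yB i; lra.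
  have h2 := HK n i n0.
  have -> : ces_avg T n (T y) i - ces_avg T n x0 i =
     (ces_avg T n (T y) i - ces_avg T n y i) + (ces_avg T n y i - ces_avg T n x0 i) by ring.
  apply: le_trans (_ : _ <= n%:R * `|ces_avg T n (T y) i - ces_avg T n y i| +
                         n%:R * `|ces_avg T n y i - ces_avg T n x0 i|) _.
    by rewrite -mulrDr; apply: ler_wpM2l => //; apply: ler_normD.
  have -> : n%:R * `|ces_avg T n (T y) i - ces_avg T n y i| = `|iter n T y i - y i|.
    by rewrite -e1 normrM ger0_norm.
  lra.
- have by' := summable_bd sy; have bz := summable_bd sz.
  move: (l01) => /andP [l0 l1]; have l1' : 0 <= 1 - l by lra.
  split; first exact: summable_comb.
    move=> i; rewrite /comb /rseq_add /rseq_scale.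
    apply: le_trans (ler_normD _ _) _; rewrite !normrM (ger0_norm l0) (ger0_norm l1').
    have := yB i; have := zB i; nra.
  exists (K1 + K2); split; first lra.
  move=> n i n0; rewrite ces_comb //.
  have h1 := HK1 n i n0; have h2 := HK2 n i n0.
  have -> : l * ces_avg T n y i + (1 - l) * ces_avg T n z i - ces_avg T n x0 i =
     l * (ces_avg T n y i - ces_avg T n x0 i) + (1 - l) * (ces_avg T n z i - ces_avg T n x0 i) by ring.
  apply: le_trans (_ : _ <= n%:R * (l * `|ces_avg T n y i - ces_avg T n x0 i| +
       (1 - l) * `|ces_avg T n z i - ces_avg T n x0 i|)) _.
    apply: ler_wpM2l => //; apply: le_trans (ler_normD _ _) _.
    by rewrite !normrM (ger0_norm l0) (ger0_norm l1').
  rewrite mulrDr !mulrA ![n%:R * _]mulrC -!mulrA.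
  have p1 : 0 <= n%:R * `|ces_avg T n y i - ces_avg T n x0 i| by apply: mulr_ge0.
  have p2 : 0 <= n%:R * `|ces_avg T n z i - ces_avg T n x0 i| by apply: mulr_ge0.
  move: p1 p2 h1 h2; set a := n%:R * _; set b := n%:R * _ => p1 p2 h1 h2.
  nra.
Qed.

Lemma iter_in k y : inC y -> inC (iter k T y).
Proof. by elim: k => //= k IH Cy; apply: CT; apply: IH. Qed.

Lemma l01 n : 0 <= (n.+1%:R / n.+2%:R : R) <= 1.
Proof.
apply/andP; split; first by apply: divr_ge0.
by rewrite ler_pdivrMr ?ltr0n // mul1r ler_nat.
Qed.

Lemma ces_in n y : inC y -> inC (ces_avg T n.+1 y).
Proof.
move=> Cy; have [sy _ _] := inC_prop Cy; have by' := summable_bd sy.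
elim: n => [|n IH]; first by rewrite ces_1.
rewrite ces_S //; apply: Cc => //; first exact: l01.
exact: iter_in.
Qed.

Lemma q_ces n y : inC y -> q (ces_avg T n.+1 y) <= q y.
Proof.
move=> Cy; have [sy _ _] := inC_prop Cy; have by' := summable_bd sy.
elim: n => [|n IH]; first by rewrite ces_1.
rewrite ces_S //.
have [sc _ _] := inC_prop (ces_in n Cy).
have si := iter_summable Tl1 n.+1 sy.
apply: le_trans (q_comb (l01 n) sc si) _.
have h := q_iter Tlin Tinf Tl1 n.+1 sy.
have := l01 n; move=> /andP [l0 l1].
set l := n.+1%:R / n.+2%:R in l0 l1 *.
move: IH h; nra.
Qed.

End Birk2.


Lemma sq_le_abs (R : realType) (a c : R) : 0 <= c -> a ^+ 2 <= c ^+ 2 -> `|a| <= c.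
Proof.
move=> c0 h; rewrite -(real_normK (num_real a)) in h.
have X0 : 0 <= `|a| := normr_ge0 a.
move: h X0; set X := `|a|; rewrite !expr2; nra.
Qed.

Lemma bound_N (R : realType) (K eta : R) (n : nat) : 0 <= K -> 0 < eta ->
  ((Num.bound (3 * K / eta)).+1 <= n)%N -> K <= n%:R * (eta / 3).
Proof.
move=> K0 e0 Nn.
have h := archi_boundP (divr_ge0 (mulr_ge0 (ler0n _ 3) K0) (ltW e0)).
have h2 : ((Num.bound (3 * K / eta))%:R : R) <= n%:R.
  by rewrite ler_nat; apply: ltnW.
have h3 : 3 * K / eta < n%:R := lt_le_trans h h2.
rewrite ltr_pdivrMr // in h3.
have e3 : n%:R * (eta / 3) = n%:R * eta / 3 by rewrite mulrA.
rewrite e3; lra.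
Qed.

Section Conv.
Variable R : realType.
Implicit Types (x y z u v w : rseq R).
Variable T : rseq R -> rseq R.
Variable Tlin : linear_on_linf T.
Variable Tinf : forall x, bounded x -> norm_inf (T x) <= norm_inf x.
Variable Tl1 : forall x, summable x -> summable (T x) /\ norm1 (T x) <= norm1 x.

Lemma cauchy_summable x0 : summable x0 -> forall eta : R, 0 < eta ->
  exists N, forall n m, (N <= n)%N -> (N <= m)%N -> forall i,
   `|ces_avg T n x0 i - ces_avg T m x0 i| <= eta.
Proof.
move=> sx0 eta e0.
set Cs := [set q y | y in inC T x0].
have Clb : forall y, inC T x0 y -> 0 <= q y.
  by move=> y Cy; have [sy _ _] := inC_prop Tlin Tinf Tl1 sx0 Cy; apply: q_ge0.
have hinf : has_inf Cs.
  split; first by exists (q x0), x0 => //; apply: C0.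
  by exists 0 => _ [y Cy <-]; apply: Clb.
set d2 := inf Cs.
set eps := eta ^+ 2 / 72.
have eps0 : 0 < eps by apply: divr_gt0 => //; apply: exprn_gt0.
have [_ [y Cy <-] qy] := inf_adherent eps0 hinf.
have [sy _ [K [K0 HK]]] := inC_prop Tlin Tinf Tl1 sx0 Cy.
exists (Num.bound (3 * K / eta)).+1 => n m Nn Nm i.
have n0 : (0 < n)%N by apply: leq_trans Nn.
have m0 : (0 < m)%N by apply: leq_trans Nm.
have side : forall p, (0 < p)%N -> ((Num.bound (3 * K / eta)).+1 <= p)%N ->
    `|ces_avg T p x0 i - ces_avg T p y i| <= eta / 3.
  move=> p p0 Np; have h := HK p i p0; have h2 := bound_N K0 e0 Np.
  have pp : (0 : R) < p%:R by rewrite ltr0n.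
  rewrite distrC; rewrite -(ler_pM2l pp); apply: le_trans h h2.
have mid : `|ces_avg T n y i - ces_avg T m y i| <= eta / 3.
  case: n n0 Nn {side} => // n' _ _; case: m m0 Nm => // m' _ _.
  have Cu := ces_in Tlin Tinf Tl1 sx0 n' Cy.
  have Cv := ces_in Tlin Tinf Tl1 sx0 m' Cy.
  have [su _ _] := inC_prop Tlin Tinf Tl1 sx0 Cu.
  have [sv _ _] := inC_prop Tlin Tinf Tl1 sx0 Cv.
  have qu := q_ces Tlin Tinf Tl1 sx0 n' Cy.
  have qv := q_ces Tlin Tinf Tl1 sx0 m' Cy.
  have Cm : inC T x0 (comb (1/2) (ces_avg T n'.+1 y) (ces_avg T m'.+1 y)).
    by apply: Cc => //; apply/andP; split; lra.
  have qm : d2 <= q (comb (1/2) (ces_avg T n'.+1 y) (ces_avg T m'.+1 y)).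
    apply: ge_inf; first exact: (proj2 hinf).
    by exists (comb (1/2) (ces_avg T n'.+1 y) (ces_avg T m'.+1 y)).
  have P := parallelogram i su sv eps0.
  apply: sq_le_abs; first lra.
  have : ((ces_avg T n'.+1 y i - ces_avg T m'.+1 y i) / 2) ^+ 2 <= 2 * eps.
    apply: le_trans P _; move: qu qv qm qy; lra.
  rewrite /eps; set dd := ces_avg T n'.+1 y i - ces_avg T m'.+1 y i.
  rewrite !expr2 => hh; nra.
have s1 := side n n0 Nn; have s2 := side m m0 Nm.
have -> : ces_avg T n x0 i - ces_avg T m x0 i =
  (ces_avg T n x0 i - ces_avg T n y i) + (ces_avg T n y i - ces_avg T m y i)
  + (ces_avg T m y i - ces_avg T m x0 i) by ring.
apply: le_trans (ler_normD _ _) _; apply: le_trans (lerD (ler_normD _ _) (lexx _)) _.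
rewrite (distrC (ces_avg T m y i)); lra.
Qed.

End Conv.


Lemma seq_cauchy_lim (R : realType) (a : nat -> R) :
  (forall e : R, 0 < e -> exists N, forall n m, (N <= n)%N -> (N <= m)%N -> `|a n - a m| <= e) ->
  exists l : R, forall e : R, 0 < e -> exists N, forall n, (N <= n)%N -> `|l - a n| <= e.
Proof.
move=> H.
have : cvg (a @ \oo).
  suff : cauchy (a @ \oo) by exact: cauchy_cvg.
  suff : cauchy_ex (a @ \oo) by exact: cauchy_exP.
  move=> e e0; rewrite /fmapE -ball_normE /ball_.
  have [N HN] := H (e / 2) (divr_gt0 e0 (ltr0Sn _ 1)).
  exists (a N), N => // m Nm.
  apply: le_lt_trans (HN N m (leqnn N) Nm) _; lra.
rewrite cvg_ex /= => -[l Hl]; exists l => e e0.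
have := (cvgrPdist_le _ _).1 Hl e e0.
move=> [N _ HN]; exists N => n Nn; exact: HN.
Qed.


Section Main.
Variable R : realType.
Implicit Types (x y z u v w : rseq R).
Variable T : rseq R -> rseq R.
Variable Tlin : linear_on_linf T.
Variable Tinf : forall x, bounded x -> norm_inf (T x) <= norm_inf x.
Variable Tl1 : forall x, summable x -> summable (T x) /\ norm1 (T x) <= norm1 x.

Lemma unif_cauchy x : bounded x -> c0 x -> forall eta : R, 0 < eta ->
  exists N, forall n m, (N <= n)%N -> (N <= m)%N -> forall i,
   `|ces_avg T n x i - ces_avg T m x i| <= eta.
Proof.
move=> bx cx eta e0.
have e3 : 0 < eta / 3 by apply: divr_gt0.
have [N0 HN0] := trunc_close cx e3.
have sx' := trunc_summable N0 x.
have bx' := summable_bd sx'.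
have [N HN] := cauchy_summable Tlin Tinf Tl1 sx' e3.
exists N => n m Nn Nm i.
have nd : norm_inf (rseq_sub x (trunc N0 x)) <= eta / 3.
  by apply: norm_inf_le; apply: HN0.
have h1 := ces_pt Tlin Tinf n i (bounded_sub bx bx').
have h2 := ces_pt Tlin Tinf m i (bounded_sub bx bx').
rewrite ces_sub // in h1; rewrite ces_sub // in h2.
have h3 := HN n m Nn Nm i.
have -> : ces_avg T n x i - ces_avg T m x i =
  (ces_avg T n x i - ces_avg T n (trunc N0 x) i) +
  (ces_avg T n (trunc N0 x) i - ces_avg T m (trunc N0 x) i) -
  (ces_avg T m x i - ces_avg T m (trunc N0 x) i) by ring.
apply: le_trans (ler_normB _ _) _; apply: le_trans (lerD (ler_normD _ _) (lexx _)) _.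
move: (le_trans h1 nd) (le_trans h2 nd) h3; lra.
Qed.

Lemma iter_c0 k x : bounded x -> c0 x -> c0 (iter k T x).
Proof.
elim: k => //= k IH bx cx; apply: T_c0 => //; [exact: iter_bd | exact: IH].
Qed.

Lemma Maj_ces x n : bounded x -> c0 x -> Maj (Phi x) (ces_avg T n x).
Proof.
move=> bx cx.
have cm : forall a b, (a <= b)%N -> Phi x a <= Phi x b by move=> a b; apply: Phi_mono.
have Mi : forall k, Maj (Phi x) (iter k T x).
  elim => [|k IH] /=; first by move=> S uS; apply: sum_le_Phi.
  apply: calderon => //; [exact: iter_bd | exact: iter_c0].
move=> S uS; rewrite /ces_avg.
case: n => [|n].
  under eq_bigr do rewrite big_ord0 mulr0 normr0.
  by rewrite big1 //; apply: Phi_ge0.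
apply: le_trans (_ : _ <= \sum_(j <- S) (n.+1%:R^-1 * \sum_(k < n.+1) `|iter k T x j|)) _.
  apply: ler_sum => j _; rewrite normrM ger0_norm ?invr_ge0 ?ler0n //.
  apply: ler_wpM2l; first by rewrite invr_ge0 ler0n.
  exact: ler_norm_sum.
rewrite -mulr_sumr exchange_big /=.
apply: le_trans (_ : _ <= n.+1%:R^-1 * \sum_(k < n.+1) Phi x (size S)) _.
  apply: ler_wpM2l; first by rewrite invr_ge0 ler0n.
  by apply: ler_sum => k _; apply: Mi.
rewrite sumr_const card_ord -[Phi x (size S) *+ n.+1]mulr_natl mulrA mulVf ?mul1r //.
by rewrite pnatr_eq0.
Qed.

End Main.

Unset Implicit Arguments.

Theorem theorem1p1 (R : realType) (E : set (rseq R)) (normE : rseq R -> R)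
  (T : rseq R -> rseq R) :
  fully_symmetric_space E normE ->
  (exists x : rseq R, bounded x /\ ~ E x) ->
  dunford_schwartz T ->
  forall x, E x ->
  exists xh, E xh /\
    forall eps : R, 0 < eps -> exists N : nat, forall n : nat, (N <= n)%N ->
      norm_inf (rseq_sub (ces_avg T n x) xh) < eps.
Proof.
move=> [Esym Efull] nE [Tlin [Tl1 Tinf]] x Ex.
have cx := E_c0 Esym nE Ex.
have bx : bounded x by case: Esym => H _; apply: H.
have UC := unif_cauchy Tlin Tinf Tl1 bx cx.
have [xh Hxh] : exists xh : rseq R, forall i, forall e : R, 0 < e ->
    exists N, forall n, (N <= n)%N -> `|xh i - ces_avg T n x i| <= e.
  have [f Hf] := (@choice nat R (fun i (l : R) => forall e : R, 0 < e ->
    exists N, forall n, (N <= n)%N -> `|l - ces_avg T n x i| <= e)) (fun i =>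
    @seq_cauchy_lim R (fun n => ces_avg T n x i) (fun e e0 => let: ex_intro N HN := UC e e0 in
       ex_intro _ N (fun n m Nn Nm => HN n m Nn Nm i))).
  by exists f.
have UN : forall eta : R, 0 < eta -> exists N, forall n, (N <= n)%N -> forall i,
    `|ces_avg T n x i - xh i| <= eta.
  move=> eta e0; have [N HN] := UC eta e0; exists N => n Nn i.
  apply/ler_addgt0Pr => d d0.
  have [N' HN'] := Hxh i d d0.
  set m := maxn N N'.
  have h1 := HN n m Nn (leq_maxl _ _) i.
  have h2 := HN' m (leq_maxr _ _).
  have -> : ces_avg T n x i - xh i = (ces_avg T n x i - ces_avg T m x i) - (xh i - ces_avg T m x i) by ring.
  apply: le_trans (ler_normB _ _) _; lra.
have bxh : bounded xh.
  have [N HN] := UN 1 ltr01.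
  exists (norm_inf x + 1) => i.
  have h := HN N (leqnn N) i.
  have h2 := ces_pt Tlin Tinf N i bx.
  have -> : xh i = ces_avg T N x i - (ces_avg T N x i - xh i) by ring.
  apply: le_trans (ler_normB _ _) _; lra.
have Mxh : Maj (Phi x) xh.
  move=> S uS.
  apply: (@le_eps_mul R _ _ (size S)%:R) => // d d0.
  have [N HN] := UN d d0.
  have H := Maj_ces Tlin Tinf Tl1 N bx cx uS.
  apply: le_trans (_ : _ <= \sum_(j <- S) (`|ces_avg T N x j| + d)) _.
    apply: ler_sum => j _.
    have h := HN N (leqnn N) j.
    have -> : xh j = ces_avg T N x j - (ces_avg T N x j - xh j) by ring.
    apply: le_trans (ler_normB _ _) _; lra.
  by rewrite big_split /= sum_const_list lerD2r.
exists xh; split.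
  apply: (proj1 (Efull xh x bxh Ex _)) => k.
  apply: (@le_eps_mul R _ _ k%:R); first exact: ler0n.
  move=> d d0.
  have [S [uS sS HS]] := Phi_le_sum k bxh d0.
  have := Mxh S uS; rewrite sS => h.
  rewrite -/(Phi xh k) -/(Phi x k); move: HS h; lra.
move=> eps e0.
have [N HN] := UN (eps / 2) (divr_gt0 e0 (ltr0Sn _ 1)).
exists N => n Nn.
apply: le_lt_trans (_ : _ <= eps / 2) _; last lra.
by apply: norm_inf_le => i; rewrite /rseq_sub; apply: HN.
Qed.
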